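(* Let $G=(V,E)$ be a finite simple undirected graph of maximum degree at most $3$, let $M^*$ be a maximum matching of $G$, and let $M$ be the matching output by any run of the \textsc{1-2-MinGreedy} algorithm on $G$. Then $|M|\geq \frac{2}{3}|M^*|$.
   Context: The (deterministic) \textsc{1-2-MinGreedy} algorithm starts with $M=\emptyset$ and repeats until no edges remain in the current graph (initially $G$): if every node has current degree at least $3$, it selects an arbitrary edge $\{u,v\}$; otherwise it selects an arbitrary node $u$ of minimum non-zero current degree and an arbitrary neighbor $v$ of $u$. It then adds $\{u,v\}$ to $M$ and removes all edges incident with $u$ or $v$ from the current graph. All arbitrary choices may be made adversarially; the claim holds for every run. (Every run of the deterministic \textsc{MinGreedy} algorithm, which always selects a node of minimum non-zero current degree and an arbitrary neighbor, is also a run of \textsc{1-2-MinGreedy}.) *)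

(* Defs.v *)
From mathcomp Require Import all_boot.
Set Implicit Arguments. Unset Strict Implicit. Unset Printing Implicit Defensive.

Section Graph.
Variables (T : finType) (e : rel T).

Definition simple_graph : Prop := irreflexive e /\ symmetric e.

Definition deg (x : T) : nat := #|[set y | e x y]|.

(* Current graph after the nodes in D have been matched (all edges incident
   with a node of D removed): edge x y survives iff neither endpoint is in D. *)
Definition live (D : {set T}) (x y : T) : bool :=
  [&& e x y, x \notin D & y \notin D].

Definition cdeg (D : {set T}) (x : T) : nat := #|[set y | live D x y]|.

(* Allowed choice of {u,v} in the current graph (D) by 1-2-MinGreedy:
   {u,v} is a current edge and either every node of non-zero current degree
   has current degree >= 3 (arbitrary edge), or u has minimum non-zero
   current degree (and v is an arbitrary neighbour of u). *)
Definition allowed (D : {set T}) (u v : T) : Prop :=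
  live D u v /\
  ((forall x, 0 < cdeg D x -> 3 <= cdeg D x) \/
   (forall x, 0 < cdeg D x -> cdeg D u <= cdeg D x)).

Fixpoint run_from (D : {set T}) (s : seq (T * T)) : Prop :=
  match s with
  | [::] => forall x y, ~~ live D x y
  | (u, v) :: s' => allowed D u v /\ run_from (D :|: [set u; v]) s'
  end.

Definition greedy_run (s : seq (T * T)) : Prop := run_from set0 s.

Definition run_matching (s : seq (T * T)) : {set {set T}} :=
  [set [set p.1; p.2] | p in s].

Definition is_matching (M : {set {set T}}) : Prop :=
  (forall S, S \in M -> exists x y, e x y /\ S = [set x; y]) /\
  (forall S1 S2, S1 \in M -> S2 \in M -> S1 != S2 -> [disjoint S1 & S2]).

Definition maximum_matching (M : {set {set T}}) : Prop :=
  is_matching M /\ forall N, is_matching N -> #|N| <= #|M|.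

End Graph.

(* Main.v *)
Require Import Defs.
From mathcomp Require Import all_boot zify.
Set Implicit Arguments. Unset Strict Implicit. Unset Printing Implicit Defensive.

Section Proof.
Variables (T : finType) (e : rel T).
Hypothesis irr : irreflexive e.
Hypothesis sym : symmetric e.
Hypothesis deg3 : forall x, deg e x <= 3.

Definition nbr (D : {set T}) x := [set y | live e D x y].

Lemma cdegE D x : cdeg e D x = #|nbr D x|.
Proof. by []. Qed.

Lemma live_sym D x y : live e D x y = live e D y x.
Proof. by rewrite /live sym; case: (y \in D); case: (x \in D); rewrite ?andbF ?andbT. Qed.

Lemma live_neq D x y : live e D x y -> x != y.
Proof. by case/and3P=> exy _ _; apply/eqP=> Exy; move: exy; rewrite Exy irr. Qed.

Lemma in_nbr D x y : (y \in nbr D x) = live e D x y.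
Proof. by rewrite inE. Qed.

Lemma cdeg_le3 D x : cdeg e D x <= 3.
Proof.
apply: leq_trans (deg3 x); apply: subset_leq_card; apply/subsetP=> y.
by rewrite !inE => /and3P[].
Qed.

Lemma live_notin D x y : live e D x y -> (x \notin D) && (y \notin D).
Proof. by case/and3P=> _ -> ->. Qed.

Definition nx D (u v : T) := D :|: [set u; v].

Lemma nbr_nx D u v x : x \notin nx D u v -> nbr (nx D u v) x = nbr D x :\: [set u; v].
Proof.
move=> hx; apply/setP=> y; rewrite !inE /live.
move: hx; rewrite /nx !inE !negb_or => /and3P[hxD hxu hxv].
rewrite hxD hxu hxv /=.
by case: (e x y); case: (y \in D); case: (y == u); case: (y == v).
Qed.

Lemma nbr_sub D u v x : nbr (nx D u v) x \subset nbr D x.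
Proof.
apply/subsetP=> y; rewrite !inE /live /nx !inE !negb_or.
by case/and3P=> -> /andP[-> _] /andP[-> _].
Qed.


Definition lmatch D (M : {set {set T}}) : bool :=
  [forall S in M, [exists x, [exists y, live e D x y && (S == [set x; y])]]] &&
  trivIset M.

Definition nu D := \max_(M | lmatch D M) #|M|.

Lemma nu_ge D M : lmatch D M -> #|M| <= nu D.
Proof. by move=> h; rewrite /nu; apply: (@leq_bigmax_cond _ (lmatch D) (fun M : {set {set T}} => #|M|) M h). Qed.

Lemma lmatch0 D : lmatch D set0.
Proof.
apply/andP; split; first by apply/forall_inP=> S; rewrite inE.
by apply/trivIsetP=> A B; rewrite inE.
Qed.

Lemma nu_wit D : exists2 M, lmatch D M & #|M| = nu D.
Proof.
have h0 : 0 < #|[pred M | lmatch D M]| by apply/card_gt0P; exists set0; rewrite inE lmatch0.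
case: (eq_bigmax_cond (fun M : {set {set T}} => #|M|) h0) => M hM hE.
by exists M; [move: hM; rewrite inE | rewrite /nu -hE].
Qed.

Lemma lmatch_edge D M S : lmatch D M -> S \in M -> exists x y, live e D x y /\ S = [set x; y].
Proof.
case/andP=> /forall_inP h _ /h /existsP[x /existsP[y /andP[hl /eqP ->]]].
by exists x, y.
Qed.

Lemma lmatch_disj D M S1 S2 : lmatch D M -> S1 \in M -> S2 \in M -> S1 != S2 -> [disjoint S1 & S2].
Proof. by case/andP=> _ /trivIsetP h; apply: h. Qed.

Definition Z D := [set x | 0 < cdeg e D x].
Definition P D := [set x | cdeg e D x == 1].

Lemma live_Z D x y : live e D x y -> x \in Z D.
Proof. by move=> h; rewrite inE; apply/card_gt0P; exists y; rewrite inE. Qed.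

Lemma nu_half D : 2 * nu D <= #|Z D|.
Proof.
case: (nu_wit D) => M hM <-.
have hc : \sum_(S in M) #|S| = #|cover M| by apply/eqP; case/andP: hM.
have h2 : \sum_(S in M) #|S| = #|M| * 2.
  rewrite -sum_nat_const; apply: eq_bigr=> S hS.
  case: (lmatch_edge hM hS) => x [y [hl ->]]; rewrite cards2.
  by rewrite (live_neq hl).
rewrite mulnC -h2 hc; apply: subset_leq_card; apply/subsetP=> z.
case/bigcupP=> S hS; case: (lmatch_edge hM hS) => x [y [hl ->]].
rewrite in_set2 => /orP[] /eqP ->; first exact: live_Z hl.
by apply: (@live_Z _ _ x); rewrite live_sym.
Qed.

Lemma card_contain1 D M u : lmatch D M -> #|[set S in M | u \in S]| <= 1.
Proof.
move=> hM; apply/card_le1_eqP=> S1 S2; rewrite !inE => /andP[h1 u1] /andP[h2 u2].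
apply/eqP; apply/negPn/negP=> hne.
have := lmatch_disj hM h2 h1 hne.
by move/disjointFr/(_ u2); rewrite u1.
Qed.

Lemma nu_drop_gen D u v (B : nat) :
  (forall M, lmatch D M -> #|[set S in M | (u \in S) || (v \in S)]| <= B) ->
  nu D <= nu (nx D u v) + B.
Proof.
move=> hB; case: (nu_wit D) => M hM <-.
set Mr := [set S in M | ~~ ((u \in S) || (v \in S))].
have hMr : lmatch (nx D u v) Mr.
  apply/andP; split.
    apply/forall_inP=> S; rewrite inE => /andP[hS hn].
    case: (lmatch_edge hM hS) => x [y [hl eS]].
    apply/existsP; exists x; apply/existsP; exists y.
    rewrite eS eqxx andbT.
    move: hn; rewrite eS !in_set2 !negb_or => /andP[/andP[ux uy] /andP[vx vy]].
    case/and3P: hl => exy xD yD.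
    rewrite /live /nx exy !inE !negb_or xD yD /=.
    by rewrite ![x == _]eq_sym ![y == _]eq_sym ux uy vx vy.
  apply: trivIsetS (proj2 (andP hM)).
  by apply/subsetP=> S; rewrite inE => /andP[].
have hcard : #|M| = #|Mr| + #|[set S in M | (u \in S) || (v \in S)]|.
  rewrite -(cardsID [set S : {set T} | (u \in S) || (v \in S)] M) addnC; congr (_ + _).
    by apply: eq_card=> S; rewrite !inE andbC.
  by apply: eq_card=> S; rewrite !inE andbC.
have := nu_ge hMr; have := hB M hM; lia.
Qed.

Lemma nu_drop2 D u v : nu D <= nu (nx D u v) + 2.
Proof.
apply: nu_drop_gen=> M hM.
have -> : [set S in M | (u \in S) || (v \in S)] = [set S in M | u \in S] :|: [set S in M | v \in S].
  by apply/setP=> S; rewrite !inE andb_orr.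
rewrite cardsU; have := card_contain1 u hM; have := card_contain1 v hM; lia.
Qed.

Lemma nu_drop1 D u v : (forall y, live e D u y -> y = v) -> nu D <= nu (nx D u v) + 1.
Proof.
move=> hu; apply: nu_drop_gen=> M hM.
have -> : [set S in M | (u \in S) || (v \in S)] = [set S in M | v \in S].
  apply/setP=> S; rewrite !inE; case hS: (S \in M) => //=.
  case: (lmatch_edge hM hS) => x [y [hl ->]]; rewrite !in_set2.
  case: (boolP ((u == x) || (u == y))) => //= /orP[] /eqP Eu.
    by rewrite -Eu in hl; rewrite (hu _ hl) eqxx orbT.
  by rewrite -Eu live_sym in hl; rewrite (hu _ hl) eqxx.
exact: card_contain1 hM.
Qed.

Definition K D u v := (Z D :\: [set u; v]) :\: Z (nx D u v).

Lemma Z_notin D x : x \in Z D -> x \notin D.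
Proof. by rewrite inE => /card_gt0P[y]; rewrite inE => /live_notin /andP[]. Qed.

Lemma Z_nx_sub D u v : Z (nx D u v) \subset Z D :\: [set u; v].
Proof.
apply/subsetP=> x hx; have hxn := Z_notin hx.
move: hx; rewrite !inE => /card_gt0P[y]; rewrite inE => hl.
move: hxn; rewrite /nx !inE negb_or => /andP[_ ->] /=.
apply/card_gt0P; exists y; rewrite inE.
by move/subsetP: (nbr_sub D u v x) => /(_ y); rewrite !inE; apply.
Qed.

Lemma cardZ D u v : live e D u v -> #|Z D| = #|Z (nx D u v)| + 2 + #|K D u v|.
Proof.
move=> huv.
have hU : [set u; v] \subset Z D.
  apply/subsetP=> x; rewrite in_set2 => /orP[] /eqP ->; first exact: live_Z huv.
  by apply: (@live_Z _ _ u); rewrite live_sym.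
rewrite -(cardsID [set u; v] (Z D)) (setIidPr hU) cards2 (live_neq huv).
rewrite -(cardsID (Z (nx D u v)) (Z D :\: [set u; v])) (setIidPr (Z_nx_sub D u v)).
by rewrite /K; lia.
Qed.

Lemma K_prop D u v x : x \in K D u v ->
  [/\ x \notin D, x \notin [set u; v], nbr D x \subset [set u; v] & 0 < cdeg e D x].
Proof.
rewrite /K => /setDP[/setDP[hZ hU] hZ'].
have xD := Z_notin hZ.
move: (hU); rewrite in_set2 negb_or => /andP[xu xv].
have xD' : x \notin nx D u v by rewrite /nx !inE !negb_or xD xu xv.
split=> //; [by rewrite xu xv| |by move: hZ; rewrite inE].
have : nbr (nx D u v) x == set0.
  by rewrite -cards_eq0 -/(cdeg e _ x); move: hZ'; rewrite inE lt0n negbK.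
by rewrite (nbr_nx xD') setD_eq0.
Qed.

Lemma P'_prop D u v x : x \in P (nx D u v) ->
  [/\ x \notin D, x \notin [set u; v], x \in Z (nx D u v) & #|nbr D x :\: [set u; v]| = 1].
Proof.
rewrite inE => /eqP h1.
have hZ : x \in Z (nx D u v) by rewrite inE h1.
have xD' := Z_notin hZ.
have xD : x \notin D by apply: contra xD' => h; apply/setUP; left.
have hU : x \notin [set u; v] by apply: contra xD' => h; apply/setUP; right.
split=> //; by rewrite -(nbr_nx xD').
Qed.

Lemma meet_U D u v x : #|nbr D x :\: [set u; v]| < #|nbr D x| ->
  (u \in nbr D x) || (v \in nbr D x).
Proof.
apply: contraLR; rewrite negb_or => /andP[hu hv]; rewrite -leqNgt.
apply: subset_leq_card; apply/subsetP=> y hy; rewrite !inE negb_or.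
rewrite inE in hy; rewrite hy andbT.
by apply/andP; split; apply/eqP=> E; [move: hu | move: hv]; rewrite -E inE hy.
Qed.

Lemma card_split (N : {set T}) u v : #|N| <= (u \in N) + (v \in N) + #|N :\: [set u; v]|.
Proof.
rewrite (cardsD1 u N) (cardsD1 v (N :\ u)).
have -> : N :\ u :\ v = N :\: [set u; v].
  by apply/setP=> y; rewrite !inE negb_or andbA [(y != v) && _]andbC.
rewrite [v \in N :\ u]inE addnA leq_add2r leq_add2l.
by case: (v \in N); rewrite ?andbT ?andbF //; case: (v \notin [set u]).
Qed.

Lemma cdeg_ge x D : 0 < cdeg e D x -> x \notin D.
Proof. by move/card_gt0P=> [y]; rewrite inE => /live_notin /andP[]. Qed.

Lemma notK D u v x : x \in Z (nx D u v) -> x \notin K D u v.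
Proof. by move=> h; rewrite /K inE h. Qed.

Lemma uK D u v : u \notin K D u v.
Proof. by rewrite /K !inE eqxx /= andbF. Qed.

Definition Phi D := maxn (nu D + (#|Z D|).+1 %/ 2) (#|Z D| - #|P D| %/ 2).

Lemma step_pendant D u v : live e D u v -> cdeg e D u = 1 -> Phi D <= 3 + Phi (nx D u v).
Proof.
move=> huv hdu.
have hu : forall y, live e D u y -> y = v.
  move=> y hy; have := hdu; rewrite /cdeg => /eqP/cards1P[z hz].
  have : y \in [set z] by rewrite -hz inE.
  have : v \in [set z] by rewrite -hz inE.
  by rewrite !in_set1 => /eqP -> /eqP ->.
set A := nbr D v :\ u.
have hA : #|A| <= 2.
  have := cdeg_le3 D v; rewrite /cdeg -/(nbr D v) (cardsD1 u (nbr D v)) -/A.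
  by rewrite inE live_sym huv.
have hK : forall x, x \in K D u v -> (x \in A) && (x \in P D).
  move=> x /K_prop [xD xU hsub hpos].
  have nux : u \notin nbr D x.
    apply/negP; rewrite inE => h; rewrite live_sym in h.
    by move: xU; rewrite (hu _ h) in_set2 eqxx orbT.
  have hs : nbr D x \subset [set v].
    apply/subsetP=> y hy; move/subsetP: hsub => /(_ y hy); rewrite in_set2.
    case/orP=> /eqP E; first by move: nux; rewrite -E hy.
    by rewrite E in_set1.
  have hc : cdeg e D x = 1.
    apply/eqP; rewrite eqn_leq hpos andbT -(cards1 v); exact: subset_leq_card hs.
  have vin : v \in nbr D x.
    move: hpos => /card_gt0P[y hy].
    by move/subsetP: hs => /(_ y hy); rewrite in_set1 => /eqP <-.
  move: xU; rewrite in_set2 negb_or => /andP[xu _].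
  by rewrite /A /P !inE xu hc eqxx live_sym -in_nbr vin.
have hKA : K D u v \subset A by apply/subsetP=> x /hK /andP[].
have hKP : u |: K D u v \subset P D.
  apply/subsetP=> x; rewrite in_setU1 => /orP[/eqP ->|/hK /andP[] //].
  by rewrite /P inE hdu.
have hP' : P (nx D u v) \subset (P D :\: (u |: K D u v)) :|: (A :\: K D u v).
  apply/subsetP=> x hx; case/P'_prop: (hx) => xD xU xZ hc1.
  have xK := notK xZ.
  move: (xU); rewrite in_set2 negb_or => /andP[xu xv].
  case hx1: (cdeg e D x == 1).
    by apply/setUP; left; apply/setDP; split; [rewrite /P inE hx1 | rewrite in_setU1 negb_or xu xK].
  have hlt : #|nbr D x :\: [set u; v]| < #|nbr D x|.
    rewrite hc1 ltn_neqAle eq_sym -/(cdeg e D x) hx1 /=.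
    by rewrite -hc1 subset_leq_card // subsetDl.
  case/orP: (meet_U hlt); rewrite in_nbr => h.
    by rewrite live_sym in h; move: xv; rewrite (hu _ h) eqxx.
  by apply/setUP; right; apply/setDP; split=> //; rewrite /A in_setD1 xu in_nbr live_sym.
have c1 : #|P (nx D u v)| <= #|P D :\: (u |: K D u v)| + #|A :\: K D u v|.
  apply: leq_trans (subset_leq_card hP') _; rewrite cardsU; exact: leq_subr.
rewrite (cardsDS hKP) (cardsDS hKA) cardsU1 (negbTE (uK D u v)) /= in c1.
have c2 : #|K D u v| <= #|A| by exact: subset_leq_card hKA.
have c3 : 1 + #|K D u v| <= #|P D| by have := subset_leq_card hKP; rewrite cardsU1 (uK D u v).
have hnu := nu_drop1 hu.
have hZ := cardZ huv.
rewrite /Phi; lia.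
Qed.

Lemma nbr_subU_card D u v x : nbr D x \subset [set u; v] ->
  #|nbr D x| <= (u \in nbr D x) + (v \in nbr D x).
Proof.
move=> hs; have := card_split (nbr D x) u v.
by move: hs; rewrite -setD_eq0 => /eqP ->; rewrite cards0 addn0.
Qed.

Lemma step_nonpend D u v : live e D u v ->
  (forall x, 0 < cdeg e D x -> 2 <= cdeg e D x) ->
  (cdeg e D u = 2 \/ forall x, 0 < cdeg e D x -> 3 <= cdeg e D x) ->
  Phi D <= 3 + Phi (nx D u v).
Proof.
move=> huv h2 hcase.
have hP0 : #|P D| = 0.
  apply/eqP; rewrite cards_eq0; apply/eqP/setP=> x; rewrite /P !inE.
  by apply/negP=> /eqP h1; have := h2 x; rewrite h1 => /(_ isT).
have hnu := nu_drop2 D u v.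
have hhalf := nu_half D.
have hZ := cardZ huv.
have vu : v \in nbr D u by rewrite in_nbr.
have uv : u \in nbr D v by rewrite in_nbr live_sym.
have hAu : #|nbr D u :\ v| + 1 = cdeg e D u by rewrite /cdeg -/(nbr D u) (cardsD1 v (nbr D u)) vu addnC.
have hBv : #|nbr D v :\ u| + 1 = cdeg e D v by rewrite /cdeg -/(nbr D v) (cardsD1 u (nbr D v)) uv addnC.
have hdv := cdeg_le3 D v.
have hdu := cdeg_le3 D u.
suff [hk hp] : #|K D u v| <= 1 /\ #|P (nx D u v)| + 2 * #|K D u v| <= 3.
  by rewrite /Phi hP0; lia.
case: hcase => [hu2|h3].
  set Au := nbr D u :\ v; set Bv := nbr D v :\ u.
  have hKAB : K D u v \subset Au :&: Bv.
    apply/subsetP=> x /K_prop [xD xU hsub hpos].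
    have := nbr_subU_card hsub; have := h2 _ hpos; rewrite /cdeg -/(nbr D x).
    move: xU; rewrite in_set2 negb_or => /andP[xu xv].
    case: (boolP (u \in nbr D x)) => hux; case: (boolP (v \in nbr D x)) => hvx //= ; try lia.
    move: hux hvx; rewrite !in_nbr => hux hvx.
    by rewrite /Au /Bv !in_setI !in_setD1 xu xv !in_nbr live_sym hux live_sym hvx.
  have hP' : P (nx D u v) \subset (Au :|: Bv) :\: K D u v.
    apply/subsetP=> x hx; case/P'_prop: (hx) => xD xU xZ hc1.
    have xK := notK xZ.
    move: (xU); rewrite in_set2 negb_or => /andP[xu xv].
    have hpos : 0 < cdeg e D x.
      rewrite /cdeg -/(nbr D x).
      exact: leq_trans (eq_leq (esym hc1)) (subset_leq_card (subsetDl _ _)).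
    have hlt : #|nbr D x :\: [set u; v]| < #|nbr D x| by rewrite hc1; exact: h2 _ hpos.
    apply/setDP; split=> //.
    case/orP: (meet_U hlt); rewrite in_nbr => h; apply/setUP; [left|right].
      by rewrite /Au in_setD1 xv in_nbr live_sym h.
    by rewrite /Bv in_setD1 xu in_nbr live_sym h.
  have c1 := subset_leq_card hP'.
  rewrite cardsDS in c1; last by apply: subset_trans hKAB _; apply/subsetP=> y /setIP[hy _]; apply/setUP; left.
  rewrite cardsU in c1.
  have c2 := subset_leq_card hKAB.
  have c3 : #|Au :&: Bv| <= #|Au| by apply: subset_leq_card; exact: subsetIl.
  have c4 : #|Au :&: Bv| <= #|Au :|: Bv| by apply: subset_leq_card; apply/subsetP=> y /setIP[hy _]; apply/setUP; left.
  rewrite -/Au in hAu; rewrite -/Bv in hBv.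
  lia.
have hK0 : #|K D u v| = 0.
  apply/eqP; rewrite cards_eq0; apply/eqP/setP=> x; rewrite in_set0.
  apply/negP=> /K_prop [xD xU hsub hpos].
  have := nbr_subU_card hsub; have := h3 _ hpos; rewrite /cdeg -/(nbr D x).
  by case: (u \in nbr D x); case: (v \in nbr D x) => /=; lia.
have hP' : P (nx D u v) \subset nbr D u :\ v.
  apply/subsetP=> x hx; case/P'_prop: (hx) => xD xU xZ hc1.
  move: (xU); rewrite in_set2 negb_or => /andP[xu xv].
  have hpos : 0 < cdeg e D x.
    rewrite /cdeg -/(nbr D x).
    exact: leq_trans (eq_leq (esym hc1)) (subset_leq_card (subsetDl _ _)).
  have := card_split (nbr D x) u v; have := h3 _ hpos; rewrite /cdeg -/(nbr D x) hc1.
  case: (boolP (u \in nbr D x)) => hux /=; last by case: (v \in nbr D x) => /=; lia.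
  by move=> _ _; rewrite in_setD1 xv in_nbr live_sym -in_nbr hux.
have c1 := subset_leq_card hP'.
lia.
Qed.

Lemma step D u v : allowed e D u v -> Phi D <= 3 + Phi (nx D u v).
Proof.
case=> huv hor.
have hpos : 0 < cdeg e D u by apply/card_gt0P; exists v; rewrite inE.
case: (boolP (cdeg e D u == 1)) => [/eqP h1|hn1]; first exact: step_pendant.
have hu2 : 2 <= cdeg e D u by move: hpos hn1; case: (cdeg e D u) => [|[|n]].
apply: step_nonpend => //.
  move=> x hx; case: hor => h; first by apply: leq_trans (h x hx).
  exact: leq_trans hu2 (h x hx).
case: (boolP (cdeg e D u == 2)) => [/eqP -> | hn2]; first by left.
right=> x hx; have hu3 : 3 <= cdeg e D u by move: hu2 hn2; case: (cdeg e D u) => [|[|[|n]]].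
by case: hor => h; [exact: h | exact: leq_trans hu3 (h x hx)].
Qed.

Lemma Phi_end D : (forall x y, ~~ live e D x y) -> Phi D = 0.
Proof.
move=> hno.
have hZ : #|Z D| = 0.
  apply/eqP; rewrite cards_eq0; apply/eqP/setP=> x; rewrite in_set0.
  apply/negP; rewrite inE => /card_gt0P[y]; rewrite inE.
  by rewrite (negbTE (hno x y)).
have hP : #|P D| <= #|Z D|.
  apply: subset_leq_card; apply/subsetP=> x; rewrite !inE => /eqP ->; done.
have hnu := nu_half D.
rewrite /Phi; lia.
Qed.

Lemma run_bound s D : run_from e D s -> Phi D <= 3 * size s.
Proof.
elim: s D => [|[u v] s IH] D /=.
  by move=> h; rewrite Phi_end.
case=> hal hr; have := step hal; have := IH _ hr; rewrite /nx; lia.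
Qed.

Lemma run_notin s D : run_from e D s -> forall p, p \in s -> (p.1 \notin D) && (p.2 \notin D).
Proof.
elim: s D => [|[u v] s IH] D //= [[huv _] hr] p.
rewrite inE => /orP[/eqP -> | hp]; first exact: live_notin huv.
case/andP: (IH _ hr p hp) => h1 h2.
by apply/andP; split; [apply: contra h1 | apply: contra h2] => h; apply/setUP; left.
Qed.

Lemma run_card s D : run_from e D s -> #|run_matching s| = size s.
Proof.
elim: s D => [|[u v] s IH] D /=.
  by move=> _; apply/eqP; rewrite cards_eq0; apply/eqP/setP=> S; rewrite in_set0; apply/negP=> /imsetP[p].
case=> hal hr.
have -> : run_matching ((u, v) :: s) = [set u; v] |: run_matching s.
  apply/setP=> S; rewrite in_setU1; apply/imsetP/orP.
    case=> p; rewrite inE => /orP[/eqP -> -> | hp ->]; first by left.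
    by right; apply/imsetP; exists p.
  case=> [/eqP -> | /imsetP[p hp ->]]; first by exists (u, v); rewrite ?inE ?eqxx.
  by exists p => //; rewrite inE hp orbT.
rewrite cardsU1 (IH _ hr).
suff -> : [set u; v] \notin run_matching s by [].
apply/negP=> /imsetP[p hp hE].
have := run_notin hr hp; rewrite /nx.
have : u \in [set p.1; p.2] by rewrite -hE in_set2 eqxx.
by rewrite in_set2 => /orP[] /eqP <-; rewrite !inE eqxx /= ?orbT ?andbF.
Qed.

End Proof.

Theorem theorem1 (T : finType) (e : rel T) (Mstar : {set {set T}})
    (s : seq (T * T)) :
  simple_graph e ->
  (forall x : T, deg e x <= 3) ->
  maximum_matching e Mstar ->
  greedy_run e s ->
  2 * #|Mstar| <= 3 * #|run_matching s|.
Proof.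
move=> [irr sym] hdeg [[hM1 hM2] _] hrun.
have hb := run_bound irr sym hdeg hrun.
rewrite (run_card hrun).
have hlm : lmatch e set0 Mstar.
  apply/andP; split.
    apply/forall_inP=> S hS; case: (hM1 S hS) => x [y [hxy ->]].
    by apply/existsP; exists x; apply/existsP; exists y; rewrite /live !in_set0 hxy eqxx.
  by apply/trivIsetP=> A B hA hB; apply: hM2.
have h1 := nu_ge hlm.
have h2 : 2 * nu e set0 <= #|Z e set0| := nu_half irr sym set0.
move: hb; rewrite /Phi; lia.
Qed.
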